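(* Let $X$ be a real Banach space, $\varphi$ a strictly convex increasing function on $[0,\infty)$ with $\varphi(0)=0$, and $r$ a symmetric real random variable with $\|r\|_\infty=1$. Then: (1) A point $x\in S_X$ is an extreme point of $B_X$ if and only if [$y\in X$ and $\mathbb{E}[\varphi(\|x+ry\|)]=\varphi(1)$] implies $y=0$. (2) A point $x\in S_X$ is a strongly extreme point of $B_X$ if and only if for every $\epsilon>0$ there is $\delta>0$ such that $\mathbb{E}[\varphi(\|x+ry\|)]\ge\varphi(1)+\delta$ whenever $\|y\|\ge\epsilon$. (3) $X$ is uniformly convex if and only if $\delta_\varphi(\epsilon)>0$ for every $\epsilon>0$, where $\delta_\varphi(\epsilon)=\inf\{\mathbb{E}[\varphi(\|x+ry\|)]-\varphi(1): x\in S_X,\ \|y\|\ge\epsilon\}$.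
   Context: $S_X$ and $B_X$ are the unit sphere and closed unit ball of $X$. A point $x\in S_X$ is an extreme point of $B_X$ if $\max\{\|x+y\|,\|x-y\|\}=1$ implies $y=0$. It is a strongly extreme point of $B_X$ if for every $\epsilon>0$ there is $\delta>0$ with $\inf\{\max\{\|x+y\|,\|x-y\|\}:\|y\|\ge\epsilon\}\ge1+\delta$. $X$ is uniformly convex if for every $\epsilon>0$ there is $\delta>0$ with $\inf\{\max\{\|x+y\|,\|x-y\|\}:\|y\|\ge\epsilon,\|x\|=1\}\ge1+\delta$. $\varphi$ strictly convex means $\varphi(\frac{s+t}{2})<\frac{\varphi(s)+\varphi(t)}{2}$ for distinct $s,t$. A random variable is symmetric if $r$ and $-r$ have the same distribution. *)

(* Defs.v *)
From HB Require Import structures.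
From mathcomp Require Import all_boot all_order all_algebra.
From mathcomp Require Import all_classical all_reals all_analysis ess_sup_inf.
Set Implicit Arguments. Unset Strict Implicit. Unset Printing Implicit Defensive.
Import Order.TTheory GRing.Theory Num.Theory.
Import numFieldNormedType.Exports.
Local Open Scope classical_set_scope.
Local Open Scope ring_scope.

Section defs.
Context {R : realType} {X : normedModType R}.

Definition extreme_pt (x : X) : Prop :=
  `|x| = 1 /\ forall y : X, Num.max `|x + y| `|x - y| = 1 -> y = 0.

Definition strongly_extreme_pt (x : X) : Prop :=
  `|x| = 1 /\ forall eps : R, 0 < eps -> exists2 delta : R, 0 < delta &
    forall y : X, eps <= `|y| -> 1 + delta <= Num.max `|x + y| `|x - y|.

Definition uniformly_convex : Prop :=
  forall eps : R, 0 < eps -> exists2 delta : R, 0 < delta &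
    forall x y : X, `|x| = 1 -> eps <= `|y| ->
      1 + delta <= Num.max `|x + y| `|x - y|.

Definition strictly_convex_on_nonneg (phi : R -> R) : Prop :=
  forall s t : R, 0 <= s -> 0 <= t -> s != t ->
    phi ((s + t) / 2) < (phi s + phi t) / 2.

Definition increasing_on_nonneg (phi : R -> R) : Prop :=
  forall s t : R, 0 <= s -> s <= t -> phi s <= phi t.

End defs.

Section prob.
Context {R : realType} {d : measure_display} {T : measurableType d}.

Definition symmetric_rv (P : probability T R) (r : T -> R) : Prop :=
  forall A : set R, measurable A ->
    P (r @^-1` A) = P ((fun w => - r w) @^-1` A).

Definition Ephi {X : normedModType R} (P : probability T R) (r : T -> R)
  (phi : R -> R) (x y : X) : \bar R :=
  (\int[P]_w (phi `|x + r w *: y|)%:E)%E.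

Definition delta_phi {X : normedModType R} (P : probability T R) (r : T -> R)
  (phi : R -> R) (eps : R) : \bar R :=
  ereal_inf [set (Ephi P r phi xy.1 xy.2 - (phi 1)%:E)%E
             | xy in [set xy : X * X | `|xy.1| = 1 /\ eps <= `|xy.2|]].
End prob.

(* Main.v *)
Require Import Defs.
From HB Require Import structures.
From mathcomp Require Import all_boot all_order all_algebra.
From mathcomp Require Import all_classical all_reals all_analysis ess_sup_inf.
From mathcomp Require Import ring lra zify measurable_realfun.
Import Order.TTheory GRing.Theory Num.Theory.
Import numFieldNormedType.Exports.
Local Open Scope classical_set_scope.
Local Open Scope ring_scope.
Section Main.
Variables (R : realType) (phi : R -> R).
Hypothesis phi_sconv : strictly_convex_on_nonneg phi.
Hypothesis phi_incr : increasing_on_nonneg phi.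
Hypothesis phi0 : phi 0 = 0.

Lemma phi_mid (s t : R) : 0 <= s -> 0 <= t -> phi ((s + t) / 2) <= (phi s + phi t) / 2.
Proof.
move=> s0 t0; have [->|st] := eqVneq s t.
  have -> : (t + t) / 2 = t by field.
  lra.
exact/ltW/phi_sconv.
Qed.

Lemma phi_ge0 (s : R) : 0 <= s -> 0 <= phi s.
Proof. by move=> s0; rewrite -phi0; apply: phi_incr. Qed.

Lemma phi_lt (s t : R) : 0 <= s -> s < t -> phi s < phi t.
Proof.
move=> s0 st; rewrite lt_neqAle phi_incr ?(ltW st) // andbT.
apply/negP => /eqP e.
have t0 : 0 <= t by apply: le_trans (ltW st).
have m0 : 0 <= (s + t) / 2 by apply: divr_ge0 => //; apply: addr_ge0.
have h1 : phi s <= phi ((s + t) / 2) by apply: phi_incr => //; lra.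
have h2 := phi_sconv s t s0 t0 (negbT (lt_eqF st)).
move: h2; rewrite -e; lra.
Qed.

Lemma comb_ge0 (u w l : R) : 0 <= u -> 0 <= w -> 0 <= l <= 1 -> 0 <= u + l * (w - u).
Proof.
move=> u0 w0 /andP[l0 l1].
have -> : u + l * (w - u) = (1 - l) * u + l * w by ring.
by apply: addr_ge0; apply: mulr_ge0; rewrite ?subr_ge0.
Qed.

Lemma phi_dyadic n : forall k : nat, (k <= 2 ^ n)%N -> forall u w : R, 0 <= u -> 0 <= w ->
  phi (u + k%:R / 2 ^+ n * (w - u)) <= phi u + k%:R / 2 ^+ n * (phi w - phi u).
Proof.
elim: n => [|n IH] k kle u w u0 w0.
  rewrite expr0 divr1; move: kle; rewrite expn0 leq_eqVlt ltnS leqn0 => /orP[]/eqP->.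
    by rewrite mul1r addrC subrK mul1r addrC subrK.
  by rewrite mul0r !addr0 mul0r addr0.
set q : R := 2 ^+ n.
have q0 : 0 < q by rewrite exprn_gt0.
rewrite exprS -/q.
set j := k./2.
have kE : k = (odd k + j.*2)%N by rewrite odd_double_half.
have jle : (j <= 2 ^ n)%N.
  move: kle; rewrite expnS {1}kE; case: (odd k) => /=; lia.
have l01 (i : nat) : (i <= 2 ^ n)%N -> 0 <= i%:R / q <= 1.
  move=> ile; apply/andP; split; first by apply: divr_ge0 => //; apply: ltW.
  by rewrite ler_pdivrMr // mul1r /q -natrX ler_nat.
have [ko|ke] := boolP (odd k).
  have j1 : (j.+1 <= 2 ^ n)%N.
    move: kle; rewrite expnS {1}kE ko /=.
    have : (0 < 2 ^ n)%N by rewrite expn_gt0.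
    lia.
  set pj := u + j%:R / q * (w - u).
  set pj1 := u + j.+1%:R / q * (w - u).
  have e1 : u + k%:R / (2 * q) * (w - u) = (pj + pj1) / 2.
    rewrite /pj /pj1 kE ko -mul2n natrD natrM -addn1 natrD /=; field.
    by rewrite gt_eqF.
  have e2 : phi u + k%:R / (2 * q) * (phi w - phi u) =
    ((phi u + j%:R / q * (phi w - phi u)) + (phi u + j.+1%:R / q * (phi w - phi u))) / 2.
    rewrite kE ko -mul2n natrD natrM -addn1 natrD /=; field.
    by rewrite gt_eqF.
  have hm := @phi_mid pj pj1 (@comb_ge0 u w _ u0 w0 (l01 _ jle)) (@comb_ge0 u w _ u0 w0 (l01 _ j1)).
  rewrite e1 e2; apply: le_trans hm _.
  apply: ler_wpM2r; first by rewrite invr_ge0.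
  by apply: lerD; apply: IH.
have -> : k%:R / (2 * q) = j%:R / q.
  rewrite kE (negbTE ke) /= -mul2n natrM; field.
  by rewrite gt_eqF.
exact: IH.
Qed.


Lemma phi_conv_le (u w l : R) : 0 <= u -> u <= w -> 0 <= l <= 1 ->
  phi (u + l * (w - u)) <= phi u + l * (phi w - phi u).
Proof.
move=> u0 uw /andP[l0 l1].
have w0 : 0 <= w by apply: le_trans uw.
set C := phi w - phi u.
have C0 : 0 <= C by rewrite subr_ge0; apply: phi_incr.
apply/ler_addgt0Pr => e e0.
set n := (Num.trunc (C / e)).+1.
set q : R := 2 ^+ n.
have q0 : 0 < q by rewrite exprn_gt0.
have Cq : C / q <= e.
  rewrite ler_pdivrMr //.
  have h1 : C / e < n%:R by rewrite /n; apply: truncnS_gt.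
  have h2 : n%:R <= q by rewrite /q -natrX ler_nat; apply/ltnW/ltn_expl.
  have h3 : C < n%:R * e by rewrite -ltr_pdivrMr.
  by apply: (le_trans (ltW h3)); rewrite [e * q]mulrC ler_pM2r.
have [k [kle lk kl]] : exists k : nat, [/\ (k <= 2 ^ n)%N, l <= k%:R / q & k%:R / q <= l + 1 / q].
  have a0 : 0 <= l * q by apply: mulr_ge0 => //; apply: ltW.
  have /andP[t1 t2] := trunc_itv a0.
  set t := Num.trunc (l * q) in t1 t2.
  have [tn|tn] := leqP t.+1 (2 ^ n).
    exists t.+1; split => //.
      by rewrite ler_pdivlMr //; apply: ltW.
    rewrite ler_pdivrMr // mulrDl mul1r mulVf ?gt_eqF //.
    by rewrite -addn1 natrD; lra.
  exists (2 ^ n)%N; split => //.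
    by rewrite natrX -/q divff ?gt_eqF.
  rewrite natrX -/q divff ?gt_eqF //.
  have : q <= t%:R by rewrite /q -natrX ler_nat -ltnS.
  move=> h; have : q <= l * q by apply: le_trans t1.
  rewrite -{1}[q]mul1r ler_pM2r // => l1'.
  have : 0 <= 1 / q by rewrite divr_ge0 //; apply: ltW.
  lra.
have z0 : 0 <= u + l * (w - u) by apply: comb_ge0 => //; apply/andP.
apply: le_trans (phi_incr (u + l * (w - u)) (u + k%:R / q * (w - u)) z0 _) _.
  by rewrite lerD2l; apply: ler_wpM2r => //; rewrite subr_ge0.
apply: le_trans (@phi_dyadic n k kle u w u0 w0) _.
rewrite -/q -/C -addrA lerD2l.
apply: le_trans (ler_wpM2r C0 kl) _.
rewrite mulrDl lerD2l mul1r mulrC; exact: Cq.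
Qed.

Lemma phi_conv (u w l : R) : 0 <= u -> 0 <= w -> 0 <= l <= 1 ->
  phi (u + l * (w - u)) <= phi u + l * (phi w - phi u).
Proof.
move=> u0 w0 /andP[l0 l1]; have [uw|wu] := leP u w.
  by apply: phi_conv_le => //; apply/andP.
have h := @phi_conv_le w u (1 - l) w0 (ltW wu).
have -> : u + l * (w - u) = w + (1 - l) * (u - w) by ring.
have -> : phi u + l * (phi w - phi u) = phi w + (1 - l) * (phi u - phi w) by ring.
by apply: h; apply/andP; split; lra.
Qed.

Lemma phi_pair_aux (a b c : R) : 0 <= a -> 0 <= b -> 2 <= a + b -> 0 <= c <= 1 ->
  1 + c <= a -> phi (1 + c) + phi (1 - c) <= phi a + phi b.
Proof.
move=> a0 b0 ab /andP[c0 c1] ca.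
have [bc|bc] := leP (1 - c) b.
  apply: lerD; apply: phi_incr => //; lra.
set D := 2 - 2 * b.
have D0 : 0 < D by rewrite /D; lra.
set L := (1 - c - b) / D.
have L0 : 0 <= L by apply: divr_ge0; lra.
have L1 : L <= 1 by rewrite ler_pdivrMr // mul1r /D; lra.
have b2 : 0 <= 2 - b by lra.
have h1 := @phi_conv b (2 - b) L b0 b2 (introT andP (conj L0 L1)).
have h2 := @phi_conv b (2 - b) (1 - L) b0 b2.
have h2' : 0 <= 1 - L <= 1 by apply/andP; split; lra.
have {h2 h2'} h2 := h2 h2'.
have E1 : b + L * (2 - b - b) = 1 - c by rewrite /L /D; field; rewrite gt_eqF.
have E2 : b + (1 - L) * (2 - b - b) = 1 + c by rewrite /L /D; field; rewrite gt_eqF.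
rewrite E1 in h1; rewrite E2 in h2.
have h3 : phi (2 - b) <= phi a by apply: phi_incr => //; lra.
lra.
Qed.

Lemma phi_pair (a b c : R) : 0 <= a -> 0 <= b -> 2 <= a + b -> 0 <= c <= 1 ->
  1 + c <= Num.max a b -> phi (1 + c) + phi (1 - c) <= phi a + phi b.
Proof.
move=> a0 b0 ab c01; rewrite le_max => /orP[h|h].
  exact: phi_pair_aux.
rewrite [phi a + _]addrC; apply: phi_pair_aux => //.
by rewrite addrC.
Qed.

Definition gap (c : R) := (phi (1 + c) + phi (1 - c)) / 2 - phi 1.

Lemma gap_ge0 (c : R) : 0 <= c <= 1 -> 0 <= gap c.
Proof.
move=> /andP[c0 c1]; rewrite /gap subr_ge0.
have := @phi_mid (1 + c) (1 - c) ltac:(lra) ltac:(lra).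
by have -> : (1 + c + (1 - c)) / 2 = 1 by field.
Qed.

Lemma gap_gt0 (c : R) : 0 < c <= 1 -> 0 < gap c.
Proof.
move=> /andP[c0 c1]; rewrite /gap subr_gt0.
have := @phi_sconv (1 + c) (1 - c) ltac:(lra) ltac:(lra).
have -> : (1 + c + (1 - c)) / 2 = 1 by field.
apply; apply/negP => /eqP; lra.
Qed.

Lemma phi_rcont (e : R) : 0 < e -> exists2 dl : R, 0 < dl & phi (1 + dl) < phi 1 + e.
Proof.
move=> e0.
set K := phi 2 - phi 1.
have K0 : 0 <= K by rewrite subr_ge0; apply: phi_incr; lra.
set dl := Num.min 1 (e / (2 * (K + 1))).
have dlp : 0 < dl by rewrite /dl lt_min ltr01 /=; apply: divr_gt0 => //; lra.
have dl1 : dl <= 1 by rewrite /dl ge_min lexx.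
have dl2 : dl <= e / (2 * (K + 1)) by rewrite /dl ge_min lexx orbT.
exists dl => //.
have h := @phi_conv 1 2 dl ler01 ltac:(lra) (introT andP (conj (ltW dlp) dl1)).
have -> : 1 + dl = 1 + dl * (2 - 1) by ring.
apply: (le_lt_trans h); rewrite ltrD2l -/K.
have h1 : dl * K <= dl * (K + 1) by rewrite ler_pM2l //; lra.
have h2 : dl * (K + 1) <= e / (2 * (K + 1)) * (K + 1) by rewrite ler_pM2r //; lra.
have h3 : e / (2 * (K + 1)) * (K + 1) = e / 2 by field; lra.
lra.
Qed.

Variable (X : normedModType R).

Lemma sum_ge2 (x z : X) : `|x| = 1 -> 2 <= `|x + z| + `|x - z|.
Proof.
move=> x1.
have -> : (2 : R) = `|(x + z) + (x - z)|.
  rewrite addrACA subrr addr0 -mulr2n normrMn x1; by [].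
exact: ler_normD.
Qed.

Lemma max_ge1 (x z : X) : `|x| = 1 -> 1 <= Num.max `|x + z| `|x - z|.
Proof.
move=> x1; have := @sum_ge2 x z x1.
rewrite le_max; case: (leP 1 `|x + z|) => //= h1 h2.
lra.
Qed.

Lemma norm_comb (x y : X) (t : R) : `|t| <= 1 ->
  `|x + t *: y| <= Num.max `|x + y| `|x - y|.
Proof.
move=> t1.
set a := (1 + t) / 2; set b := (1 - t) / 2.
have := ler_norml t 1; rewrite t1 => /esym/andP[ht1 ht2].
have a0 : 0 <= a by rewrite /a; apply: divr_ge0; lra.
have b0 : 0 <= b by rewrite /b; apply: divr_ge0; lra.
have ab : a + b = 1 by rewrite /a /b; field.
have ab' : a - b = t by rewrite /a /b; field.
have -> : x + t *: y = a *: (x + y) + b *: (x - y).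
  by rewrite !scalerDr scalerN addrACA -scalerDl -scalerBl ab ab' scale1r.
set M := Num.max _ _.
apply: le_trans (ler_normD _ _) _.
have -> : `|a *: (x + y)| = a * `|x + y| by rewrite normrZ (ger0_norm a0).
have -> : `|b *: (x - y)| = b * `|x - y| by rewrite normrZ (ger0_norm b0).
have h1 : `|x + y| <= M by rewrite /M le_max lexx.
have h2 : `|x - y| <= M by rewrite /M le_max lexx orbT.
have : a * `|x + y| <= a * M by apply: ler_wpM2l.
have : b * `|x - y| <= b * M by apply: ler_wpM2l.
have : a * M + b * M = M by rewrite -mulrDl ab mul1r.
lra.
Qed.


Variables (d : measure_display) (T : measurableType d) (P : probability T R)
  (r : {RV P >-> R}).
Hypothesis r_sym : symmetric_rv P r.
Hypothesis r_inf : ess_sup P (fun w => (`|r w|)%:E) = 1%E.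

Definition Ahalf := [set w | 1 / 2 <= `|r w|].

Lemma mr : measurable_fun setT r.
Proof. exact: measurable_funPT. Qed.

Lemma mA : measurable Ahalf.
Proof.
have -> : Ahalf = setT `&` (((fun u : R => `|u|) \o r) @^-1` `[1 / 2, +oo[%classic).
  by rewrite setTI; apply/seteqP; split => w /=; rewrite /Ahalf /= in_itv /= andbT.
have mn : measurable_fun setT ((fun u : R => `|u|) \o r).
  apply: measurableT_comp; [exact: normr_measurable | exact: mr].
by apply: mn => //; exact: measurable_itv.
Qed.

Lemma ae_r1 : {ae P, forall w, `|r w| <= 1}.
Proof.
have h : (ess_sup P (fun w => (`|r w|)%:E) <= 1)%E by rewrite r_inf.
move/ess_supP: h; apply: filterS => w; by rewrite lee_fin.
Qed.

Lemma PA_gt0 : (0 < P Ahalf)%E.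
Proof.
rewrite lt0e measure_ge0 andbT; apply/negP => /eqP PA0.
have : (ess_sup P (fun w => (`|r w|)%:E) <= (1 / 2)%:E)%E.
  apply/ess_supP; exists Ahalf; split => //; first exact: mA.
  move=> w /= /negP; rewrite lee_fin -ltNge => /ltW.
  by rewrite /Ahalf /=.
rewrite r_inf lee_fin; lra.
Qed.

Definition nr : {mfun T >-> R} := HB.pack (\- (r : T -> R))
  (isMeasurableFun.Build _ _ _ _ (\- (r : T -> R)) (measurable_funN mr)).

Lemma int_sym (g : R -> \bar R) : measurable_fun setT g -> (forall t, (0 <= g t)%E) ->
  (\int[P]_w g (r w) = \int[P]_w g (- r w)%R)%E.
Proof.
move=> mg g0.
transitivity (\int[distribution P r]_y g y)%E.
  by rewrite ge0_integral_distribution.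
transitivity (\int[distribution P nr]_y g y)%E; last first.
  by rewrite ge0_integral_distribution.
apply: (eq_measure_integral (distribution P nr)) => B mB _.
exact: r_sym.
Qed.

Definition Gf (x y : X) (t : R) := phi `|x + t *: y|.

Lemma mG x y : measurable_fun setT (Gf x y).
Proof.
have -> : Gf x y = (fun s => phi (Num.max 0 s)) \o (fun t => `|x + t *: y|).
  by apply/funext => t /=; rewrite /Gf max_r.
apply: measurableT_comp; last first.
  apply: continuous_measurable_fun => t.
  apply: (continuous_comp (f := fun t : R => x + t *: y)); last exact: norm_continuous.
  apply: continuousD; first exact: cst_continuous.
  by apply: continuousZr_tmp => ?.
apply: nondecreasing_measurable => // s t st.
apply: (phi_incr (Num.max 0 s) (Num.max 0 t)); first by rewrite le_max lexx.
rewrite ge_max; apply/andP; split; rewrite le_max ?lexx //.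
by apply/orP; right.
Qed.

Lemma mGr x y : measurable_fun setT (fun w => (Gf x y (r w))%:E).
Proof. by apply/measurable_EFinP; exact: (measurableT_comp (mG x y) mr). Qed.

Lemma mGnr x y : measurable_fun setT (fun w => (Gf x y (- r w))%:E).
Proof. by apply/measurable_EFinP; exact: (measurableT_comp (mG x y) (measurable_funN mr)). Qed.

Lemma Gf_ge0 x y t : 0 <= Gf x y t.
Proof. exact: phi_ge0. Qed.

Lemma Ephi_sym x y : Ephi P r phi x y = (\int[P]_w (Gf x y (- r w))%:E)%E.
Proof.
rewrite /Ephi; apply: (int_sym (fun t => (Gf x y t)%:E)).
  by apply/measurable_EFinP; exact: mG.
by move=> t; rewrite lee_fin; exact: Gf_ge0.
Qed.

Lemma PAfin : P Ahalf = (fine (P Ahalf))%:E.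
Proof.
rewrite fineK // ge0_fin_numE ?measure_ge0 //.
by apply: (le_lt_trans (probability_le1 P mA)); rewrite ltey.
Qed.

Lemma p_gt0 : 0 < fine (P Ahalf).
Proof. by apply: fine_gt0; rewrite PA_gt0 /= (le_lt_trans (probability_le1 P mA)) // ltey. Qed.

Lemma Ephi_lb (x y : X) (c : R) : `|x| = 1 -> 0 <= c <= 1 ->
  (forall t : R, 1 / 2 <= `|t| -> 1 + c <= Num.max `|x + t *: y| `|x - t *: y|) ->
  ((phi 1 + fine (P Ahalf) * gap c)%:E <= Ephi P r phi x y)%E.
Proof.
move=> x1 c01 hc.
have I0 : (0 <= Ephi P r phi x y)%E.
  by apply: integral_ge0 => w _; rewrite lee_fin; apply: phi_ge0.
have e2 : (Ephi P r phi x y + Ephi P r phi x y =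
    \int[P]_w ((Gf x y (r w))%:E + (Gf x y (- r w))%:E))%E.
  rewrite (ge0_integralD P measurableT) //; last 4 first.
  - by move=> w _; rewrite lee_fin; exact: Gf_ge0.
  - exact: mGr.
  - by move=> w _; rewrite lee_fin; exact: Gf_ge0.
  - exact: mGnr.
  by rewrite -Ephi_sym.
set p := fine (P Ahalf).
have p0 : 0 <= p := ltW p_gt0.
have g0 : 0 <= gap c := @gap_ge0 c c01.
have phi10 : 0 <= phi 1 by apply: phi_ge0.
have pw : forall w, ((2 * phi 1)%:E + ((2 * gap c)%:E * (\1_Ahalf w)%:E) <=
    (Gf x y (r w))%:E + (Gf x y (- r w))%:E)%E.
  move=> w; rewrite /Gf scaleNr.
  have ab := @sum_ge2 x (r w *: y) x1.
  rewrite -EFinM -!EFinD lee_fin.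
  have hn := normr_ge0 (x + r w *: y); have hn' := normr_ge0 (x - r w *: y).
  rewrite /indic; have [wA|wA] := boolP (w \in Ahalf).
    rewrite mulr1.
    have := @phi_pair _ _ c hn hn' ab c01 (hc _ (set_mem wA)).
    rewrite /gap; lra.
  rewrite mulr0 addr0.
  have := @phi_pair _ _ 0 hn hn' ab (introT andP (conj (lexx 0) ler01)).
  rewrite addr0 subr0 => h.
  have := h (@max_ge1 x (r w *: y) x1); lra.
have lb : (\int[P]_w ((2 * phi 1)%:E + ((2 * gap c)%:E * (\1_Ahalf w)%:E)) <=
    Ephi P r phi x y + Ephi P r phi x y)%E.
  rewrite e2; apply: (ge0_le_integral P measurableT) => //.
  - move=> w _; apply: adde_ge0; first by rewrite lee_fin; apply: mulr_ge0.
    by rewrite -EFinM lee_fin; apply: mulr_ge0; [apply: mulr_ge0|rewrite /indic ler0n].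
  - apply: emeasurable_funD; first exact: measurable_cst.
    apply: emeasurable_funM; first exact: measurable_cst.
    by apply/measurable_EFinP; apply: measurable_indic; exact: mA.
  - by apply: emeasurable_funD; [exact: mGr|exact: mGnr].
have ilb : (\int[P]_w ((2 * phi 1)%:E + ((2 * gap c)%:E * (\1_Ahalf w)%:E)) =
    ((2 * phi 1) + (2 * gap c) * p)%:E)%E.
  rewrite (ge0_integralD P measurableT); last 4 first.
  - by move=> w _; rewrite lee_fin; apply: mulr_ge0.
  - exact: measurable_cst.
  - by move=> w _; rewrite -EFinM lee_fin; apply: mulr_ge0; [apply: mulr_ge0|rewrite /indic ler0n].
  - apply: emeasurable_funM; first exact: measurable_cst.
    by apply/measurable_EFinP; apply: measurable_indic; exact: mA.
  rewrite integral_cst //.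
  have PT : P setT = 1%E by exact: probability_setT.
  rewrite [X in (_ * X + _)%E]PT mule1.
  rewrite (ge0_integralZl_EFin P measurableT); last 3 first.
  - by move=> w _; rewrite lee_fin; rewrite /indic ler0n.
  - by apply/measurable_EFinP; apply: measurable_indic; exact: mA.
  - by apply: mulr_ge0.
  rewrite integral_indic //; last exact: mA.
  by rewrite setIT [X in (_ * X)%E]PAfin -/p -EFinM -EFinD.
move: lb; rewrite ilb.
case: (Ephi P r phi x y) I0 => [s||] //= s0; rewrite ?leey // -EFinD !lee_fin.
lra.
Qed.

Lemma Ephi_ge1 (x y : X) : `|x| = 1 -> ((phi 1)%:E <= Ephi P r phi x y)%E.
Proof.
move=> x1.
have := @Ephi_lb x y 0 x1 (introT andP (conj (lexx 0) ler01)).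
have -> : gap 0 = 0 by rewrite /gap addr0 subr0; field.
rewrite mulr0 !addr0; apply.
by move=> t _; apply: max_ge1.
Qed.

Lemma Ephi_ub (x y : X) (M : R) : 0 <= M -> Num.max `|x + y| `|x - y| <= M ->
  (Ephi P r phi x y <= (phi M)%:E)%E.
Proof.
move=> M0 hM.
apply: (@le_trans _ _ (\int[P]_w (cst (phi M)%:E) w)%E).
  rewrite /Ephi; apply: (ae_ge0_le_integral measurableT).
  - by move=> w _; rewrite lee_fin; apply: phi_ge0.
  - exact: mGr.
  - by move=> w _; rewrite lee_fin; apply: phi_ge0.
  - exact: measurable_cst.
  apply: filterS ae_r1 => w hw _; rewrite lee_fin; apply: phi_incr => //.
  exact: le_trans (@norm_comb x y (r w) hw) hM.
have PT : P setT = 1%E by exact: probability_setT.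
by rewrite integral_cst // [X in (_ * X)%E]PT mule1.
Qed.

Lemma hyp_from (x y : X) (eps dl : R) : 0 < eps -> eps <= `|y| ->
  (forall z : X, eps / 2 <= `|z| -> 1 + dl <= Num.max `|x + z| `|x - z|) ->
  forall t : R, 1 / 2 <= `|t| -> 1 + Num.min dl 1 <= Num.max `|x + t *: y| `|x - t *: y|.
Proof.
move=> e0 ey h t ht.
apply: le_trans (h (t *: y) _).
  by rewrite lerD2l ge_min lexx.
rewrite normrZ.
apply: (@le_trans _ _ (1 / 2 * `|y|)); first lra.
by apply: ler_wpM2r.
Qed.

Lemma min01 (dl : R) : 0 < dl -> 0 < Num.min dl 1 <= 1.
Proof. by move=> dl0; rewrite lt_min dl0 ltr01 ge_min lexx orbT. Qed.

Lemma kappa_gt0 (dl : R) : 0 < dl -> 0 < fine (P Ahalf) * gap (Num.min dl 1).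
Proof. by move=> dl0; apply: mulr_gt0; [exact: p_gt0|apply: gap_gt0; exact: min01]. Qed.

Lemma min01' (dl : R) : 0 < dl -> 0 <= Num.min dl 1 <= 1.
Proof. by move=> /min01 /andP[h1 h2]; rewrite (ltW h1) h2. Qed.

Lemma main_result :
  (forall x : X, `|x| = 1 ->
     (extreme_pt x <->
      (forall y : X, Ephi P r phi x y = (phi 1)%:E -> y = 0))) /\
  (forall x : X, `|x| = 1 ->
     (strongly_extreme_pt x <->
      (forall eps : R, 0 < eps -> exists2 delta : R, 0 < delta &
         forall y : X, eps <= `|y| ->
           (Ephi P r phi x y >= (phi 1 + delta)%:E)%E))) /\
  (@uniformly_convex R X <->
     (forall eps : R, 0 < eps -> (0 < delta_phi P r phi (X := X) eps)%E)).
Proof.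
split; [|split].
- move=> x x1; split.
  + case=> _ hext y hE.
    have [//|y0] := eqVneq y 0.
    exfalso.
    set z := 2^-1 *: y.
    set c0 := Num.max `|x + z| `|x - z| - 1.
    have c0ge : 0 <= c0 by rewrite /c0 subr_ge0; apply: max_ge1.
    have c0pos : 0 < c0.
      rewrite lt_neqAle c0ge andbT; apply/negP => /eqP c00.
      have hz : Num.max `|x + z| `|x - z| = 1 by move: c00; rewrite /c0; lra.
      have := hext z hz; move=> /eqP; rewrite scaler_eq0 invr_eq0 (negbTE y0) orbF.
      by move=> /eqP; lra.
    have hyp : forall t : R, 1 / 2 <= `|t| ->
        1 + Num.min c0 1 <= Num.max `|x + t *: y| `|x - t *: y|.
      move=> t ht.
      have t0 : t != 0 by apply/negP => /eqP t0; move: ht; rewrite t0 normr0; lra.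
      set s := (2 * t)^-1.
      have hzs : z = s *: (t *: y).
        by rewrite /z scalerA; congr (_ *: _); rewrite /s; field.
      have hs : `|s| <= 1.
        rewrite /s normfV normrM ger0_norm; last lra.
        rewrite invf_le1; first lra.
        by rewrite mulr_gt0 // normr_gt0.
      have hs' : `|- s| <= 1 by rewrite normrN.
      apply: (@le_trans _ _ (1 + c0)); first by rewrite lerD2l ge_min lexx.
      rewrite /c0 addrC subrK ge_max; apply/andP; split.
        by rewrite hzs; apply: norm_comb.
      have -> : x - z = x + (- s) *: (t *: y) by rewrite hzs scaleNr.
      exact: norm_comb.
    have := @Ephi_lb x y _ x1 (@min01' c0 c0pos) hyp.
    rewrite hE lee_fin.
    have := @kappa_gt0 c0 c0pos; lra.
  + move=> h; split => // y hy; apply: h.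
    apply/eqP; rewrite eq_le; apply/andP; split.
      by apply: Ephi_ub; rewrite ?ler01 ?hy.
    exact: Ephi_ge1.
- move=> x x1; split.
  + case=> _ hse eps eps0.
    have [dl dl0 hdl] := hse (eps / 2) (divr_gt0 eps0 (ltr0Sn _ 1)).
    exists (fine (P Ahalf) * gap (Num.min dl 1)); first exact: (@kappa_gt0 dl dl0).
    move=> y hy.
    apply: (@Ephi_lb x y _ x1 (@min01' dl dl0)).
    by apply: (@hyp_from x y eps dl eps0 hy) => z hz; apply: hdl.
  + move=> h; split => // eps eps0.
    have [dl' dl'0 hdl'] := h eps eps0.
    have [dl dl0 hphi] := @phi_rcont _ dl'0.
    exists dl => // y hy.
    rewrite leNgt; apply/negP => hlt.
    have hub := @Ephi_ub x y (1 + dl) ltac:(lra) (ltW hlt).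
    have := le_trans (hdl' y hy) hub; rewrite lee_fin; lra.
- split.
  + move=> huc eps eps0.
    have [dl dl0 hdl] := huc (eps / 2) (divr_gt0 eps0 (ltr0Sn _ 1)).
    apply: (@lt_le_trans _ _ (fine (P Ahalf) * gap (Num.min dl 1))%:E).
      by rewrite lte_fin; exact: (@kappa_gt0 dl dl0).
    apply: le_ereal_inf_tmp => z [[x y] /= [x1 hy] <-].
    have := @Ephi_lb x y _ x1 (@min01' dl dl0) (@hyp_from x y eps dl eps0 hy (fun z hz => hdl x z x1 hz)).
    case: (Ephi P r phi x y) => [s| |] /=.
    - move=> h; rewrite -?EFinB ?lee_fin in h *; lra.
    - by move=> _; rewrite addye // leey.
    - by rewrite leeNy_eq.
  + move=> h eps eps0.
    have Dp := h eps eps0.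
    set D := delta_phi P r phi (X := X) eps in Dp.
    set m := Order.min D 1%E.
    have m0 : (0 < m)%E by rewrite /m lt_min Dp lte01.
    have m1 : (m <= 1)%E by rewrite /m ge_min lexx orbT.
    have mD : (m <= D)%E by rewrite /m ge_min lexx.
    have mfin : m = (fine m)%:E.
      by rewrite fineK // ge0_fin_numE ?(ltW m0) // (le_lt_trans m1) // ltey.
    have dl'0 : 0 < fine m by apply: fine_gt0; rewrite m0 (le_lt_trans m1) // ltey.
    have [dl dl0 hphi] := @phi_rcont _ dl'0.
    exists dl => // x y x1 hy.
    rewrite leNgt; apply/negP => hlt.
    have hub := @Ephi_ub x y (1 + dl) ltac:(lra) (ltW hlt).
    have hinf : (D <= Ephi P r phi x y - (phi 1)%:E)%E.
      by apply: ereal_inf_lbound; exists (x, y).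
    have I0 : (0 <= Ephi P r phi x y)%E.
      by apply: integral_ge0 => w _; rewrite lee_fin; apply: phi_ge0.
    have := le_trans mD hinf; rewrite mfin.
    move: hub I0; case: (Ephi P r phi x y) => [s||] //=.
    move=> hs _; rewrite -?EFinB ?lee_fin => hh; rewrite lee_fin in hs; lra.
Qed.

End Main.

Theorem theorem3p1 (R : realType) (X : completeNormedModType R)
  (phi : R -> R)
  (phi_sconv : strictly_convex_on_nonneg phi)
  (phi_incr : increasing_on_nonneg phi)
  (phi0 : phi 0 = 0)
  (d : measure_display) (T : measurableType d) (P : probability T R)
  (r : {RV P >-> R})
  (r_sym : symmetric_rv P r)
  (r_inf : ess_sup P (fun w => (`|r w|)%:E) = 1%E) :
  (forall x : X, `|x| = 1 ->
     (extreme_pt x <->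
      (forall y : X, Ephi P r phi x y = (phi 1)%:E -> y = 0))) /\
  (forall x : X, `|x| = 1 ->
     (strongly_extreme_pt x <->
      (forall eps : R, 0 < eps -> exists2 delta : R, 0 < delta &
         forall y : X, eps <= `|y| ->
           (Ephi P r phi x y >= (phi 1 + delta)%:E)%E))) /\
  (@uniformly_convex R X <->
     (forall eps : R, 0 < eps -> (0 < delta_phi P r phi (X := X) eps)%E)).
Proof.
exact: main_result.
Qed.
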